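(* Let $M$ be a monoid of binary relations on a finite set $Q$ and let $e\in M$ be an idempotent. Let $\sigma\neq\tau$ be two distinct strongly connected components of the restriction of $e$ to its set of fixed points, and let $s\in\sigma$, $t\in\tau$. If $(s,t)\in e$, then for every $m\in H(e)$ we have $(t,s)\notin m$, and $(\sigma,\tau)\notin\gamma_e(m)$.
   Context: Monoid of relations: set of relations on $Q$ containing the identity and closed under composition $mn=\{(p,q)\mid\exists r,(p,r)\in m,(r,q)\in n\}$. Fixed point of $e$: $q$ with $(q,q)\in e$. $H(e)$ is the $\mathcal H$-class of $e$ in $M$, a group with identity $e$; $m^{-1}$ is the inverse in this group. For $m\in H(e)$, $\gamma_e(m)$ is the relation on the set $\Gamma$ of strongly connected components of fixed points of $e$ given by $(\rho,\sigma)\in\gamma_e(m)$ iff $(r,s)\in m$ and $(s,r)\in m^{-1}$ for some $r\in\rho$, $s\in\sigma$. *)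

(* Defs.v *)
From mathcomp Require Import all_boot.
Set Implicit Arguments. Unset Strict Implicit. Unset Printing Implicit Defensive.

Section Rels.
Variable Q : finType.

Notation relQ := {set (Q * Q)}.

Definition rid : relQ := [set pq | pq.1 == pq.2].

Definition rcomp (m n : relQ) : relQ :=
  [set pq | [exists r, ((pq.1, r) \in m) && ((r, pq.2) \in n)]].

Definition is_rel_monoid (M : {set relQ}) : Prop :=
  rid \in M /\ forall m n, m \in M -> n \in M -> rcomp m n \in M.

(* Green's H-relation in the monoid M: m H e iff mM = eM and Mm = Me *)
Definition in_Hclass (M : {set relQ}) (e m : relQ) : bool :=
  [&& m \in M,
      [exists x in M, exists y in M, (m == rcomp e x) && (e == rcomp m y)] &
      [exists x in M, exists y in M, (m == rcomp x e) && (e == rcomp y m)]].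

(* inverse of m in the group H(e) (default e if none exists) *)
Definition Hinv (M : {set relQ}) (e m : relQ) : relQ :=
  odflt e [pick n | in_Hclass M e n && (rcomp m n == e) && (rcomp n m == e)].

Definition fixpts (e : relQ) : {set Q} := [set q | (q, q) \in e].

Definition restr_fix (e : relQ) : rel Q :=
  fun p q => [&& (p, p) \in e, (q, q) \in e & (p, q) \in e].

Definition scc (e : relQ) (p : Q) : {set Q} :=
  [set q in fixpts e | connect (restr_fix e) p q && connect (restr_fix e) q p].

Definition sccs (e : relQ) : {set {set Q}} := [set scc e p | p in fixpts e].

Definition gamma (M : {set relQ}) (e m : relQ) (rho sg : {set Q}) : bool :=
  [&& rho \in sccs e, sg \in sccs e &
      [exists r in rho, exists s in sg,
         ((r, s) \in m) && ((s, r) \in Hinv M e m)]].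

End Rels.

(* Main.v *)
Require Import Defs.
From mathcomp Require Import all_boot.
Set Implicit Arguments. Unset Strict Implicit. Unset Printing Implicit Defensive.

Section H.
Variable Q : finType.
Implicit Types m n e : {set (Q * Q)}.

Lemma rcompP m n p q : reflect (exists r, (p, r) \in m /\ (r, q) \in n) ((p, q) \in rcomp m n).
Proof.
rewrite /rcomp inE /=; apply: (iffP existsP) => [[r /andP[]]|[r []]] ; eauto.
by move=> H1 H2; exists r; rewrite H1 H2.
Qed.

Lemma rcompI m n p r q : (p, r) \in m -> (r, q) \in n -> (p, q) \in rcomp m n.
Proof. by move=> H1 H2; apply/rcompP; exists r. Qed.

Lemma rcompA (a b c : {set (Q * Q)}) : rcomp a (rcomp b c) = rcomp (rcomp a b) c.
Proof.
apply/setP => [[p q]]; apply/rcompP/rcompP.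
  by move=> [r [H1 /rcompP[x [H2 H3]]]]; exists x; split => //; exact: rcompI H1 H2.
by move=> [r [/rcompP[x [H1 H2]] H3]]; exists x; split => //; exact: rcompI H2 H3.
Qed.

Lemma conn_e e p q : rcomp e e = e -> (p, p) \in e ->
  connect (restr_fix e) p q -> (p, q) \in e.
Proof.
move=> ee pp /connectP [s].
elim: s p pp => [|x s IH] p pp /=; first by move=> _ ->.
move=> /andP[/and3P[_ xx px] ps] qe.
rewrite -ee; apply: rcompI px _; exact: IH xx ps qe.
Qed.

Fixpoint pw e n k := if k is k'.+1 then rcomp n (pw e n k') else e.

Lemma core (M : {set {set (Q * Q)}}) e n r u :
  e \in M -> rcomp e e = e -> in_Hclass M e n ->
  (r, r) \in e -> (r, u) \in e -> (u, r) \in n -> (u, r) \in e.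
Proof.
move=> eM ee /and3P[nM /existsP[x /andP[xM /existsP[y /andP[yM /andP[/eqP n1 /eqP e1]]]]]
  /existsP[x' /andP[x'M /existsP[y' /andP[y'M /andP[/eqP n2 /eqP e2]]]]]] rfix ru ur.
have en : rcomp e n = n by rewrite n1 rcompA ee.
have epw : forall k, rcomp e (pw e n k) = pw e n k.
  by case=> [|k] //=; rewrite rcompA en.
have ypw : forall k, rcomp y' (pw e n k.+1) = pw e n k.
  by move=> k /=; rewrite rcompA -e2 epw.
have rr : (r, r) \in n by rewrite -en; exact: rcompI ru ur.
have rrk : forall k, (r, r) \in pw e n k.
  elim=> [|k IH] /=; last exact: rcompI rr IH.
  by [].
have back : forall i j, i < j -> pw e n i = pw e n j -> pw e n (j - i) = e.
  elim=> [|i IH] [|j] //=.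
  move=> ij H; rewrite subSS; apply: IH => //.
  by rewrite -(ypw i) -(ypw j) /= H.
pose f := fun k : 'I_(#|{set (Q * Q)}|.+1) => pw e n k.
have : ~~ injectiveb f.
  apply/negP => /injectiveP inj.
  by have := max_card (mem (codom f)); rewrite card_codom // card_ord ltnn.
move/injectivePn => [i [j ij fij]].
have key : exists k, pw e n k.+1 = e.
  rewrite /f in fij.
  case: (ltngtP i j) => [lt|lt|eqij]; last by move: ij; rewrite (val_inj eqij) eqxx.
    by exists (j - i).-1; rewrite prednK ?subn_gt0 //; exact: back.
  by exists (i - j).-1; rewrite prednK ?subn_gt0 //; apply: back => //.
have [k <-] := key; exact: rcompI ur (rrk k).
Qed.


Lemma scc_conn e sg a b : sg \in sccs e -> a \in sg -> b \in sg ->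
  connect (restr_fix e) a b.
Proof.
move=> /imsetP[p _ ->]; rewrite !inE => /and3P[_ _ ap] /and3P[_ pb _].
exact: connect_trans ap pb.
Qed.

Lemma scc_fix e sg a : sg \in sccs e -> a \in sg -> (a, a) \in e.
Proof. by move=> /imsetP[p _ ->]; rewrite !inE => /andP[]. Qed.

Lemma clash e sg tau s t : sg \in sccs e -> tau \in sccs e -> s \in sg -> t \in tau ->
  (s, t) \in e -> (t, s) \in e -> sg = tau.
Proof.
move=> /imsetP[p pf ->] /imsetP[q qf ->] sp tq st ts.
have ss : (s, s) \in e by move: sp; rewrite !inE => /andP[].
have tt : (t, t) \in e by move: tq; rewrite !inE => /andP[].
move: sp tq; rewrite !inE => /and3P[_ ps sp] /and3P[_ qt tq].
have cst : connect (restr_fix e) s t by apply: connect1; rewrite /restr_fix ss tt st.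
have cts : connect (restr_fix e) t s by apply: connect1; rewrite /restr_fix ss tt ts.
have pq : connect (restr_fix e) p q.
  exact: connect_trans ps (connect_trans cst tq).
have qp : connect (restr_fix e) q p.
  exact: connect_trans qt (connect_trans cts sp).
apply/setP => z; rewrite !inE; case: ((z, z) \in e) => //=.
apply/idP/idP => /andP[a b]; apply/andP; split.
- exact: connect_trans qp a.
- exact: connect_trans b pq.
- exact: connect_trans pq a.
- exact: connect_trans b qp.
Qed.

Lemma Hinv_H (M : {set {set (Q * Q)}}) e m : e \in M -> rcomp e e = e ->
  in_Hclass M e (Hinv M e m).
Proof.
move=> eM ee; rewrite /Hinv; case: pickP => [n /andP[/andP[]]|_] //=.
rewrite /in_Hclass eM /=; apply/andP; split; apply/existsP; exists e;
  rewrite eM /=; apply/existsP; exists e; by rewrite eM ee eqxx.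
Qed.

End H.

Theorem mainTheorem8 (Q : finType) (M : {set {set (Q * Q)}}) (e : {set (Q * Q)}) :
  is_rel_monoid M -> e \in M -> rcomp e e = e ->
  forall (sg tau : {set Q}), sg \in sccs e -> tau \in sccs e -> sg != tau ->
  forall s t : Q, s \in sg -> t \in tau -> (s, t) \in e ->
  forall m, in_Hclass M e m ->
    (t, s) \notin m /\ ~~ gamma M e m sg tau.
Proof.
move=> _ eM ee sg tau sgS tauS ne s t ss tt st m Hm.
split.
  apply/negP => ts.
  have := core eM ee Hm (scc_fix sgS ss) st ts => ts'.
  by move: ne; rewrite (clash sgS tauS ss tt st ts') eqxx.
apply/negP => /and3P[_ _ /existsP[r /andP[rs /existsP[u /andP[ut /andP[_ ur]]]]]].
have rs' : (r, s) \in e by apply: conn_e ee (scc_fix sgS rs) (scc_conn sgS rs ss).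
have tu : (t, u) \in e by apply: conn_e ee (scc_fix tauS tt) (scc_conn tauS tt ut).
have ru : (r, u) \in e by have := rcompI (rcompI rs' st) tu; rewrite !ee.
have ur' := core eM ee (Hinv_H m eM ee) (scc_fix sgS rs) ru ur.
by move: ne; rewrite (clash sgS tauS rs ut ru ur') eqxx.
Qed.
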